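(* Let $\Sigma$ be a finite set with $|\Sigma|=k\geq 3$, let $n\geq 1$, let $a,b\in\Sigma$, and let $B=\Sigma\setminus\{a,b\}$. Then every partial $n$-ary quasigroup $g:\Sigma^{n-1}\times B\to\Sigma$ has at most $2^{(k/2)^{n-1}}$ distinct extensions to an $n$-ary quasigroup $f:\Sigma^n\to\Sigma$.
   Context: An $n$-ary quasigroup of order $k=|\Sigma|$ is a function $f:\Sigma^n\to\Sigma$ such that fixing any $n-1$ of its arguments to arbitrary values of $\Sigma$ yields a bijection $\Sigma\to\Sigma$ in the remaining argument. A partial $n$-ary quasigroup is a function $g:\Omega\to\Sigma$ with $\Omega\subset\Sigma^n$ such that $g(\bar x)\neq g(\bar y)$ for any two tuples $\bar x,\bar y\in\Omega$ differing in exactly one position. An $n$-ary quasigroup $f$ is an extension of a partial $n$-ary quasigroup $g:\Omega\to\Sigma$ if $f|_{\Omega}=g$. Here $\Sigma^{n-1}\times B$ denotes the set of tuples in $\Sigma^n$ whose last coordinate lies in $B$. *)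

(* Defs.v *)
From Stdlib Require Import Reals.
From mathcomp Require Import all_boot.
From mathcomp Require Import boolp.

Set Implicit Arguments.
Unset Strict Implicit.
Unset Printing Implicit Defensive.

Notation tup n Sigma := {ffun 'I_n -> Sigma}.

Definition upd (Sigma : finType) (n : nat) (x : tup n Sigma) (i : 'I_n) (s : Sigma)
  : tup n Sigma := [ffun j => if j == i then s else x j].

Definition is_quasigroup (Sigma : finType) (n : nat) (f : tup n Sigma -> Sigma) : Prop :=
  forall (x : tup n Sigma) (i : 'I_n), bijective (fun s : Sigma => f (upd x i s)).

Definition differ_in_one (Sigma : finType) (n : nat) (x y : tup n Sigma) : bool :=
  #|[set j : 'I_n | x j != y j]| == 1.

(* partial n-ary quasigroup g : Omega -> Sigma (g is given as a total function,
   only its values on Omega matter) *)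
Definition is_partial_quasigroup (Sigma : finType) (n : nat)
  (Omega : pred (tup n Sigma)) (g : tup n Sigma -> Sigma) : Prop :=
  forall x y, Omega x -> Omega y -> differ_in_one x y -> g x != g y.

(* the domain Sigma^(n-1) x B: last coordinate (index n-1) lies in B *)
Definition last_in (Sigma : finType) (n : nat) (B : pred Sigma) : pred (tup n Sigma) :=
  fun x => [forall i : 'I_n, (val i == n.-1) ==> B (x i)].

Definition extends (Sigma : finType) (n : nat) (Omega : pred (tup n Sigma))
  (g : tup n Sigma -> Sigma) (f : tup n Sigma -> Sigma) : Prop :=
  forall x, Omega x -> f x = g x.

Definition extensions (Sigma : finType) (n : nat) (Omega : pred (tup n Sigma))
  (g : tup n Sigma -> Sigma) : {set {ffun tup n Sigma -> Sigma}} :=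
  [set f : {ffun tup n Sigma -> Sigma} |
     `[< is_quasigroup f /\ extends Omega g f >]].

(* Main.v *)
Require Import Defs.
From Stdlib Require Import Reals Lra.
From mathcomp Require Import all_boot.
From mathcomp Require Import boolp.
Set Implicit Arguments. Unset Strict Implicit. Unset Printing Implicit Defensive.

Lemma upd_id (S : finType) n (x : tup n S) i : upd x i (x i) = x.
Proof. by apply/ffunP=> j; rewrite ffunE; case: eqP => // ->. Qed.
Lemma upd_upd (S : finType) n (x : tup n S) i s t : upd (upd x i s) i t = upd x i t.
Proof. by apply/ffunP=> j; rewrite !ffunE; case: eqP. Qed.
Lemma upd_eq (S : finType) n (x : tup n S) i s : upd x i s i = s.
Proof. by rewrite ffunE eqxx. Qed.
Lemma upd_neq (S : finType) n (x : tup n S) i j s : j != i -> upd x i s j = x j.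
Proof. by rewrite ffunE => /negbTE ->. Qed.
Lemma upd_comm (S : finType) n (x : tup n S) i j s t : i != j ->
  upd (upd x i s) j t = upd (upd x j t) i s.
Proof.
move=> ij; apply/ffunP=> k; rewrite !ffunE.
case: (eqVneq k j) => [kj|kj]; case: (eqVneq k i) => [ki|ki] //.
by move: ij; rewrite -ki -kj eqxx.
Qed.
Lemma q_inj (S : finType) n (f : tup n S -> S) x i :
  is_quasigroup f -> injective (fun s => f (upd x i s)).
Proof. by move=> /(_ x i) /bij_inj. Qed.
Lemma q_surj (S : finType) n (f : tup n S -> S) x i u :
  is_quasigroup f -> exists s, f (upd x i s) = u.
Proof. by move=> /(_ x i) [h _ hK]; exists (h u); rewrite hK. Qed.
Lemma last_inE (S : finType) m (B : pred S) (x : tup m.+1 S) :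
  last_in B x = B (x ord_max).
Proof.
apply/forallP/idP => [H|Hb i]; first by have := H ord_max; rewrite /= eqxx.
by apply/implyP=> /eqP Hi; have -> : i = ord_max by apply/val_inj.
Qed.


Definition Bp (S : finType) (a b : S) := fun s : S => (s != a) && (s != b).
Definition Om (S : finType) m (a b : S) : pred (tup m.+1 S) := last_in (Bp a b).
Definition isext (S : finType) m (a b : S) (g : tup m.+1 S -> S) (f : tup m.+1 S -> S) :=
  is_quasigroup f /\ extends (@Om S m a b) g f.
Definition PP (S : finType) m (a b : S) (g : tup m.+1 S -> S) (z : tup m.+1 S) (u : S) :=
  [forall c, Bp a b c ==> (g (upd z ord_max c) != u)].

Lemma OmE (S : finType) m (a b : S) (z : tup m.+1 S) c :
  @Om S m a b (upd z ord_max c) = Bp a b c.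
Proof. by rewrite /Om last_inE upd_eq. Qed.

Lemma L2 (S : finType) m (a b : S) g f (z : tup m.+1 S) d :
  isext a b g f -> ~~ Bp a b d -> PP a b g z (f (upd z ord_max d)).
Proof.
move=> [q e] nd; apply/forallP=> c; apply/implyP=> Bc.
rewrite -e ?OmE //; apply/eqP => /(q_inj q) cd.
by move: Bc nd; rewrite cd => ->.
Qed.

Lemma L1 (S : finType) m (a b : S) g f (z : tup m.+1 S) u :
  isext a b g f -> PP a b g z u ->
  f (upd z ord_max a) = u \/ f (upd z ord_max b) = u.
Proof.
move=> [q e] /forallP Pu; have [c fc] := q_surj z ord_max u q.
case Bc: (Bp a b c).
  by move: (Pu c); rewrite Bc /= -e ?OmE // fc eqxx.
move: Bc; rewrite /Bp; case: eqP => [<-|_]; first by left.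
by case: eqP => [<-|] //; right.
Qed.


Definition ee (S : finType) m (a b : S) (g : tup m.+1 S -> S) : rel (tup m.+1 S) :=
  fun x y => [&& x != y, [exists i, (i != ord_max) && (y == upd x i (y i))],
     x ord_max == a, y ord_max == a & [exists u, PP a b g x u && PP a b g y u]].

Lemma facts (S : finType) m (a b : S) g f (x y : tup m.+1 S) i :
  isext a b g f -> i != ord_max -> y = upd x i (y i) -> x i != y i ->
  y ord_max = a ->
  [/\ f x != f y, f (upd x ord_max b) != f (upd y ord_max b) &
      a != b -> f y != f (upd y ord_max b)].
Proof.
move=> [q _] il ey xi ya; split.
- apply/eqP=> h; apply: (negP xi); apply/eqP; apply: (@q_inj _ _ f x i q).
  by rewrite /= upd_id -ey.
- apply/eqP=> h; apply: (negP xi); apply/eqP; apply: (@q_inj _ _ f (upd x ord_max b) i q).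
  have E : (upd x ord_max b) i = x i by rewrite upd_neq.
  rewrite /= -E upd_id h {1}ey upd_comm //.
- move=> ab; apply/eqP=> h; apply: (negP ab); apply/eqP; apply: (@q_inj _ _ f y ord_max q).
  by rewrite /= -ya upd_id.
Qed.

Lemma propag (S : finType) m (a b : S) g f1 f2 (x y : tup m.+1 S) :
  isext a b g f1 -> isext a b g f2 -> ee a b g x y -> f1 x = f2 x -> f1 y = f2 y.
Proof.
move=> e1 e2 /and5P[xy /existsP[i /andP[il /eqP ey]] /eqP xa /eqP ya
   /existsP[u /andP[Px Py]]] h.
have xi : x i != y i.
  by apply: contra xy => /eqP hh; apply/eqP; rewrite ey -hh upd_id.
have [A1 B1 C1] := facts e1 il ey xi ya.
have [A2 B2 C2] := facts e2 il ey xi ya.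
have xE : upd x ord_max a = x by rewrite -xa upd_id.
have yE : upd y ord_max a = y by rewrite -ya upd_id.
apply/eqP; apply/negPn/negP => ne.
have [H1|H1] := L1 e1 Py; have [H2|H2] := L1 e2 Py; rewrite ?yE in H1 H2.
- by move: ne; rewrite H1 H2 eqxx.
- have [G|G] := L1 e1 Px; rewrite ?xE in G.
    by move: A1; rewrite G H1 eqxx.
  have [G'|G'] := L1 e2 Px; rewrite ?xE in G'.
    by move: A1; rewrite h G' H1 eqxx.
  by move: B2; rewrite G' H2 eqxx.
- have [G|G] := L1 e2 Px; rewrite ?xE in G.
    by move: A2; rewrite G H2 eqxx.
  have [G'|G'] := L1 e1 Px; rewrite ?xE in G'.
    by move: A2; rewrite -h G' H2 eqxx.
  by move: B1; rewrite G' H1 eqxx.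
- case: (eqVneq a b) => ab.
    by move: ne H1 H2; rewrite -ab yE => /eqP ne <- H2; apply: ne.
  have := @L2 _ _ a b g f2 y a e2; rewrite yE /Bp eqxx /= => /(_ isT) Pf2.
  have [K|K] := L1 e1 Pf2; rewrite ?yE in K.
    by move: ne; rewrite K eqxx.
  by move: (C2 ab); rewrite -K H1 -H2 eqxx.
Qed.


Lemma ee_sym1 (S : finType) m (a b : S) g (x y : tup m.+1 S) :
  ee a b g x y -> ee a b g y x.
Proof.
case/and5P=> xy /existsP[i /andP[il /eqP ey]] xa ya /existsP[u /andP[Px Py]].
apply/and5P; split => //; first by rewrite eq_sym.
  apply/existsP; exists i; rewrite il /=; apply/eqP.
  by rewrite ey upd_upd upd_id.
by apply/existsP; exists u; rewrite Px Py.
Qed.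

Lemma ee_sym (S : finType) m (a b : S) g : symmetric (@ee S m a b g).
Proof. by move=> x y; apply/idP/idP; apply: ee_sym1. Qed.

Lemma neighbor (S : finType) m (a b : S) g f0 (x : tup m.+1 S) i :
  isext a b g f0 -> a != b -> x ord_max = a -> i != ord_max ->
  exists s, ee a b g x (upd x i s).
Proof.
move=> e0 ab xa il; have [q _] := e0.
have [s fs] := q_surj x i (f0 (upd x ord_max b)) q.
have xE : upd x ord_max a = x by rewrite -xa upd_id.
have ya : upd x i s ord_max = a by rewrite upd_neq // eq_sym.
have yE : upd (upd x i s) ord_max a = upd x i s by rewrite -{1}ya upd_id.
exists s; apply/and5P; split.
- apply/eqP => h; move: fs; rewrite -h -{1}xE => /(q_inj q) ab'.
  by move: ab; rewrite ab' eqxx.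
- by apply/existsP; exists i; rewrite il upd_eq eqxx.
- by rewrite xa.
- by rewrite ya.
- apply/existsP; exists (f0 (upd x ord_max b)); apply/andP; split.
    by apply: (@L2 _ _ a b g f0 x b e0); rewrite /Bp eqxx andbF.
  by have := @L2 _ _ a b g f0 (upd x i s) a e0; rewrite yE fs; apply; rewrite /Bp eqxx.
Qed.

Lemma propag_connect (S : finType) m (a b : S) g f1 f2 (r x : tup m.+1 S) :
  isext a b g f1 -> isext a b g f2 -> connect (@ee S m a b g) r x ->
  f1 r = f2 r -> f1 x = f2 x.
Proof.
move=> e1 e2 /connectP[p pth ->]; elim: p r pth => [|z p IH] r //=.
case/andP=> erz pth h; apply: IH => //; exact: (propag e1 e2 erz h).
Qed.

Lemma ee_closed (S : finType) m (a b : S) g :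
  closed (@ee S m a b g) [pred x : tup m.+1 S | x ord_max == a].
Proof. by move=> x y /and5P[_ _ xa ya _]; rewrite !inE xa ya. Qed.

Lemma agree_all (S : finType) m (a b : S) g (f1 f2 : {ffun tup m.+1 S -> S}) :
  isext a b g f1 -> isext a b g f2 ->
  (forall x : tup m.+1 S, x ord_max = a -> f1 x = f2 x) -> f1 = f2.
Proof.
move=> e1 e2 H; apply/ffunP => z.
have za : upd z ord_max a ord_max = a by rewrite upd_eq.
case Bc: (Bp a b (z ord_max)).
  by case: e1 e2 => [_ E1] [_ E2]; rewrite E1 ?E2 // /Om last_inE.
move: Bc; rewrite /Bp; case: eqP => [za'|zna] /=.
  by rewrite -(upd_id z ord_max) za' H // upd_eq.
case: eqP => // zb _.
rewrite -(upd_id z ord_max) zb -(upd_upd z ord_max a b).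
have P1 := @L2 _ _ a b g f1 (upd z ord_max a) b e1.
rewrite /Bp eqxx andbF in P1; have [K|K] := L1 e2 (P1 isT).
  have [q _] := e1; move: K; rewrite upd_upd -H // upd_upd.
  by move=> /(q_inj q) ab; case: zna; rewrite zb.
by rewrite upd_upd in K *.
Qed.


Lemma comp_big (S : finType) m (a b : S) g f0 (x : tup m.+1 S) :
  isext a b g f0 -> a != b -> x ord_max = a -> forall j, j <= m ->
  exists T : {set tup m.+1 S},
    (forall y, y \in T -> [/\ y ord_max = a, connect (@ee S m a b g) x y &
        forall i : 'I_m.+1, j <= i -> y i = x i]) /\ 2 ^ j <= #|T|.
Proof.
move=> e0 ab xa; elim=> [|j IH] jm.
  exists [set x]; split; last by rewrite cards1.
  by move=> y; rewrite inE => /eqP ->; split.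
have [T [HT cT]] := IH (ltnW jm).
have jm1 : j < m.+1 by apply: leq_trans jm _.
pose i0 := Ordinal jm1.
have i0l : i0 != ord_max by rewrite -val_eqE /= neq_ltn jm.
pose pp (y : tup m.+1 S) := upd y i0 (odflt (y i0) [pick s | ee a b g y (upd y i0 s)]).
have epp : forall y, y \in T -> ee a b g y (pp y).
  move=> y /HT [ya _ _]; rewrite /pp; case: pickP => [s //|none].
  have [s hs] := neighbor e0 ab ya i0l.
  by move: (none s); rewrite hs.
have ppi : forall y, y \in T -> pp y i0 != x i0.
  move=> y yT; have := epp y yT; case/and5P => ne _ _ _ _.
  have [_ _ Hy] := HT y yT; rewrite -(Hy i0) //.
  apply: contra ne => /eqP h; apply/eqP.
  have E : pp y = upd y i0 (pp y i0) by rewrite {2}/pp upd_eq.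
  by rewrite E h upd_id.
have ppo : forall y k, k != i0 -> pp y k = y k.
  by move=> y k kn; rewrite /pp upd_neq.
exists (T :|: [set pp y | y in T]); split.
  move=> y; rewrite inE => /orP[yT|/imsetP[z zT ->]].
    have [ya cy Hy] := HT y yT; split => // i ji; apply: Hy; exact: ltnW.
  have [za cz Hz] := HT z zT; split.
  - by rewrite ppo // eq_sym.
  - by apply: connect_trans cz (connect1 (epp z zT)).
  - move=> i ji; rewrite ppo; first by apply: Hz; exact: ltnW.
    by rewrite -val_eqE /= neq_ltn ji orbT.
have inj : {in T &, injective pp}.
  move=> y1 y2 y1T y2T h; apply/ffunP => k.
  case: (eqVneq k i0) => [->|kn].
    have [_ _ H1] := HT y1 y1T; have [_ _ H2] := HT y2 y2T.
    by rewrite H1 // H2.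
  by rewrite -(ppo y1 k kn) h ppo.
have dis : T :&: [set pp y | y in T] = set0.
  apply/setP => y; rewrite !inE; apply/negP => /andP[yT /imsetP[z zT yz]].
  by have [_ _ Hy] := HT y yT; move: (ppi z zT); rewrite -yz Hy // eqxx.
have := cardsUI T [set pp y | y in T]; rewrite dis cards0 addn0 card_in_imset //.
by move=> ->; rewrite expnS mul2n -addnn leq_add.
Qed.


Definition AA (S : finType) m (a : S) := [set x : tup m.+1 S | x ord_max == a].
Definition RR (S : finType) m (a b : S) g :=
  [set r in AA m a | root (@ee S m a b g) r == r].

Lemma roots_count (S : finType) m (a b : S) g f0 :
  isext a b g f0 -> a != b -> #|@RR S m a b g| * 2 ^ m <= #|AA m a|.
Proof.
move=> e0 ab; set e := ee a b g.
have sym : connect_sym e := sym_connect_sym (@ee_sym S m a b g).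
have rootA : forall x, x \in AA m a -> root e x \in AA m a.
  move=> x; have := closed_connect (@ee_closed S m a b g) (connect_root e x).
  by rewrite !inE => ->.
rewrite -[#|AA m a|]sum1_card (partition_big (root e) (mem (@RR S m a b g))); last first.
  by move=> x xA; rewrite /= inE rootA //= -/e (root_root sym).
rewrite -sum_nat_const; apply: leq_sum => r.
rewrite inE => /andP[rA /eqP rr].
rewrite sum1dep_card.
have ra : r ord_max = a by move: rA; rewrite inE => /eqP.
have [T [HT cT]] := comp_big e0 ab ra (leqnn m).
apply: (leq_trans cT); apply: subset_leq_card; apply/subsetP => y yT.
have [ya cy _] := HT y yT; rewrite !inE ya eqxx /=.
by move/(rootP sym): cy => <-; rewrite rr.
Qed.


Lemma INR_expn (k m : nat) : INR (k ^ m) = pow (INR k) m.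
Proof.
elim: m => [|m IH]; first by rewrite expn0.
by rewrite expnS -multE mult_INR IH.
Qed.

Lemma INR_le (p q : nat) : p <= q -> Rle (INR p) (INR q).
Proof. by move/leP; apply: le_INR. Qed.

Lemma real_fin (N rr k m : nat) : N <= 2 ^ rr -> rr * 2 ^ m <= k ^ m ->
  Rle (INR N) (Rpower 2 (pow (Rdiv (INR k) 2) m)).
Proof.
move=> h1 h2.
have h1' := INR_le h1; rewrite INR_expn in h1'.
have h2' := INR_le h2; rewrite -multE mult_INR !INR_expn in h2'.
Local Open Scope R_scope.
have p2 : 0 < 2 ^ m by apply: pow_lt; lra.
have e : INR rr <= (INR k / 2) ^ m.
  rewrite /Rdiv Rpow_mult_distr pow_inv.
  apply: (Rmult_le_reg_r (2 ^ m)) => //.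
  rewrite Rmult_assoc Rinv_l; last by apply: Rgt_not_eq.
  by rewrite Rmult_1_r; move: h2'; rewrite (_ : INR 2 = 2) //; simpl; lra.
apply: (Rle_trans _ _ _ h1').
rewrite (_ : INR 2 = 2); last by simpl; lra.
rewrite -Rpower_pow; last by lra.
by apply: Rle_Rpower => //; lra.
Qed.

Close Scope R_scope.

Lemma card_AA (S : finType) m (a : S) : #|AA m a| <= #|S| ^ m.
Proof.
pose h (x : tup m.+1 S) : {ffun 'I_m -> S} := [ffun j => x (widen_ord (leqnSn m) j)].
have c : #|{ffun 'I_m -> S}| = #|S| ^ m by rewrite card_ffun card_ord.
rewrite -c -(card_in_imset (f := h)).
  exact: max_card.
move=> x y; rewrite !inE => /eqP xa /eqP ya hxy; apply/ffunP => k.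
case: (ltnP k m) => km.
  have := congr1 (fun F : {ffun 'I_m -> S} => F (Ordinal km)) hxy.
  by rewrite /h !ffunE; congr (_ = _); congr (_ _); apply: val_inj.
have -> : k = ord_max by apply/val_inj/eqP; rewrite eqn_leq km -ltnS ltn_ord.
by rewrite xa ya.
Qed.

Lemma extE (S : finType) m (a b : S) g (f : {ffun tup m.+1 S -> S}) :
  f \in extensions (@last_in S m.+1 (fun s : S => (s != a) && (s != b))) g ->
  isext a b g f.
Proof. by rewrite inE => /asboolP. Qed.


Lemma ext_count (S : finType) m (a b : S) g (f0 : {ffun tup m.+1 S -> S}) :
  isext a b g f0 -> a != b ->
  #|extensions (@last_in S m.+1 (fun s : S => (s != a) && (s != b))) g|
    <= 2 ^ #|@RR S m a b g|.
Proof.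
move=> e0 ab; set E := extensions _ g; set e := ee a b g.
have sym : connect_sym e := sym_connect_sym (@ee_sym S m a b g).
pose Phi (f : {ffun tup m.+1 S -> S}) := [set r in @RR S m a b g | f r == f0 r].
rewrite -card_powerset -(card_in_imset (f := Phi)).
  apply: subset_leq_card; apply/subsetP => X /imsetP[f _ ->].
  by rewrite inE; apply/subsetP => r; rewrite inE => /andP[].
move=> f1 f2 /extE e1 /extE e2 hP.
apply: (agree_all e1 e2) => x xa.
set r := root e x.
have rR : r \in @RR S m a b g.
  have := closed_connect (@ee_closed S m a b g) (connect_root e x).
  by rewrite !inE xa eqxx /= => <-; rewrite -/e (root_root sym) eqxx.
have ra : r ord_max = a by move: rR; rewrite !inE => /andP[/eqP].
have rE : upd r ord_max a = r by rewrite -ra upd_id.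
have fr : f1 r = f2 r.
  have := congr1 (fun X : {set tup m.+1 S} => r \in X) hP; have rR2 := rR; rewrite !inE in rR2; rewrite /= /Phi !inE rR2 /=.
  case: (eqVneq (f1 r) (f0 r)) => [->|n1]; first by move/esym/eqP.
  case: (eqVneq (f2 r) (f0 r)) => [_|n2] //= _.
  have P0 := @L2 _ _ a b g f0 r a e0; rewrite rE /Bp eqxx /= in P0.
  have P2 := @L2 _ _ a b g f2 r a e2; rewrite rE /Bp eqxx /= in P2.
  have [K|K] := L1 e1 (P0 isT); rewrite ?rE in K; first by move: n1; rewrite K eqxx.
  have [K'|K'] := L1 e1 (P2 isT); rewrite ?rE in K' => //.
  by move: n2; rewrite -K' K eqxx.
apply: (propag_connect e1 e2 _ fr).
by rewrite sym connect_root.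
Qed.

Lemma ext_count_eq (S : finType) m (a : S) g :
  #|extensions (@last_in S m.+1 (fun s : S => (s != a) && (s != a))) g| <= 1.
Proof.
apply/card_le1_eqP => f1 f2 /extE e1 /extE e2.
symmetry; apply: (agree_all e1 e2) => x xa.
have xE : upd x ord_max a = x by rewrite -xa upd_id.
have P1 := @L2 _ _ a a g f1 x a e1; rewrite xE /Bp eqxx /= in P1.
by have [K|K] := L1 e2 (P1 isT); rewrite xE in K.
Qed.

Theorem lemma1 (Sigma : finType) (n : nat) (a b : Sigma)
  (g : {ffun 'I_n -> Sigma} -> Sigma) :
  (3 <= #|Sigma|)%N -> (1 <= n)%N ->
  is_partial_quasigroup (@last_in Sigma n (fun s : Sigma => (s != a) && (s != b))) g ->
  Rle (INR #|extensions (@last_in Sigma n (fun s : Sigma => (s != a) && (s != b))) g|)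
      (Rpower 2 (Rdiv (INR #|Sigma|) 2 ^ (n - 1))).
Proof.
case: n g => // m g _ _ _; rewrite subSS subn0.
case: (eqVneq a b) => [<-|ab].
  by apply: (real_fin (rr := 0)) => //; apply: ext_count_eq.
set E := extensions _ g.
case: (pickP (mem E)) => [f0 f0E|none]; last first.
  have -> : #|E| = 0 by apply: eq_card0.
  by apply: (real_fin (rr := 0)).
have e0 := extE f0E.
apply: (real_fin (ext_count e0 ab)).
exact: leq_trans (roots_count e0 ab) (card_AA m a).
Qed.
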